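(* In the setting below with $P=\mathfrak S$, the worst case setting and the normalized error criterion: $\{S_d\}$ is strongly polynomially tractable if and only if $\lambda\in\ell_\tau$ for some $\tau>0$, $\lambda_1>\lambda_2$, and $d-\#I_d\in O(1)$. Moreover, $\{S_d\}$ is polynomially tractable if and only if $\lambda\in\ell_\tau$ for some $\tau>0$ and $d-\#I_d\in O(\ln d)$.
   Context: Setting: $S_1:H_1\to G_1$ is a compact linear operator between real Hilbert spaces ($H_1$ infinite-dimensional separable); $\lambda=(\lambda_m)_{m\in\mathbb N}$, $\lambda_1\ge\lambda_2\ge\dots\ge0$, are the eigenvalues of $S_1^\dagger S_1$. $S_d=S_1^{\otimes d}:H_1^{\otimes d}\to G_1^{\otimes d}$. For each $d$ fix $\emptyset\ne I_d=\{i_1<\dots<i_{a_d}\}\subset\{1,\dots,d\}$ ($I_1=\{1\}$), put $a_d=\#I_d$, $b_d=d-a_d$, and fix one type $P\in\{\mathfrak S,\mathfrak A\}$ for all $d$; the problem $\{S_d\}$ is the family of restrictions of $S_d$ to the $I_d$-symmetric subspace (if $P=\mathfrak S$) or $I_d$-antisymmetric subspace (if $P=\mathfrak A$) of $H_1^{\otimes d}$, i.e. the range of $\frac1{a_d!}\sum_{\pi}(\pm1)U_\pi$, the sum over permutations $\pi$ of $\{1,\dots,d\}$ fixing all points outside $I_d$, $U_\pi(f_1\otimes\cdots\otimes f_d)=f_{\pi(1)}\otimes\cdots\otimes f_{\pi(d)}$, sign $(-1)^{|\pi|}$ used for $\mathfrak A$. Let $\nabla_d=\{k\in\mathbb N^d:k_{i_1}\le\dots\le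 k_{i_{a_d}}\}$ for $P=\mathfrak S$ and with strict inequalities for $P=\mathfrak A$; $\lambda_{d,k}=\prod_{l=1}^d\lambda_{k_l}$; $\psi:\mathbb N\to\nabla_d$ a bijection with $\lambda_{d,\psi(1)}\ge\lambda_{d,\psi(2)}\ge\cdots$. These are exactly the eigenvalues of $S_d^\dagger S_d$ on the subspace, and the information complexity is $n(\epsilon,d)=\#\{k\in\nabla_d:\lambda_{d,k}>\epsilon^2\}$, the initial error $\epsilon^{\rm init}_d=\sqrt{\lambda_{d,\psi(1)}}$ (equal to $\lambda_1^{d/2}$ if $P=\mathfrak S$, and $\sqrt{\lambda_1^{b_d}\lambda_1\lambda_2\cdots\lambda_{a_d}}$ if $P=\mathfrak A$). Normalized error criterion: polynomially tractable means $\exists C,p>0,q\ge0$ with $n(\epsilon'\epsilon_d^{\rm init},d)\le C(\epsilon')^{-p}d^q$ for all $d\in\mathbb N,\epsilon'\in(0,1]$; strongly polynomially tractable: this with $q=0$. Standing assumptions: $\lambda_2>0$ and $\epsilon_d^{\rm init}>0$ for all $d$. $\ell_\tau$: sequences with $\sum_m\lambda_m^\tau<\infty$. *)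

(* Defs.v *)
From Stdlib Require Import Reals Lra Lia List.
Import ListNotations.
Open Scope R_scope.

(* Eigenvalues are a sequence lam : nat -> R, 0-based: lam m = lambda_{m+1}. *)

Definition rpow (x t : R) : R := if Rle_dec x 0 then 0 else Rpower x t.

Definition in_ell (lam : nat -> R) (tau : R) : Prop :=
  exists l : R, infinite_sum (fun m => rpow (lam m) tau) l.

(* I : nat -> nat -> bool ; I d i = true iff position i (1 <= i <= d) is in I_d *)
Definition card_I (I : nat -> nat -> bool) (d : nat) : nat :=
  length (filter (I d) (seq 1 d)).

Definition b_of (I : nat -> nat -> bool) (d : nat) : nat := (d - card_I I d)%nat.

(* k in nabla_d for P = S: k is a multi-index (list of length d, entries are
   0-based eigen-indices, position i of the paper stored at nth (i-1)), with
   k_i <= k_j whenever i < j both in I_d. *)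
Definition nabla_sym (I : nat -> nat -> bool) (d : nat) (k : list nat) : Prop :=
  length k = d /\
  forall i j, (1 <= i)%nat -> (i < j)%nat -> (j <= d)%nat ->
    I d i = true -> I d j = true ->
    (nth (i - 1) k 0 <= nth (j - 1) k 0)%nat.

Definition lam_dk (lam : nat -> R) (k : list nat) : R :=
  fold_right Rmult 1 (map lam k).

Definition eps_init (lam : nat -> R) (d : nat) : R := sqrt (lam 0%nat ^ d).

(* "n(eps,d) <= N": every finite duplicate-free family of elements of
   { k in nabla_d : lambda_{d,k} > eps^2 } has at most N elements,
   i.e. # of this set is <= N. *)
Definition info_le (lam : nat -> R) (I : nat -> nat -> bool)
    (eps : R) (d : nat) (N : R) : Prop :=
  forall ks : list (list nat), NoDup ks ->
    (forall k, In k ks -> nabla_sym I d k /\ lam_dk lam k > eps ^ 2) ->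
    INR (length ks) <= N.

Definition poly_tractable (lam : nat -> R) (I : nat -> nat -> bool) : Prop :=
  exists C p q : R, C > 0 /\ p > 0 /\ q >= 0 /\
    forall (d : nat) (e : R), (1 <= d)%nat -> 0 < e <= 1 ->
      info_le lam I (e * eps_init lam d) d
        (C * Rpower e (- p) * Rpower (INR d) q).

Definition strongly_poly_tractable (lam : nat -> R) (I : nat -> nat -> bool) : Prop :=
  exists C p : R, C > 0 /\ p > 0 /\
    forall (d : nat) (e : R), (1 <= d)%nat -> 0 < e <= 1 ->
      info_le lam I (e * eps_init lam d) d (C * Rpower e (- p)).

(* Main.v *)
Require Import Defs.
From Stdlib Require Import Reals List Lia Lra Arith Sorted.
Import ListNotations.
Open Scope R_scope.

Definition lsum {A} (f : A -> R) (l : list A) : R :=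
  fold_right (fun x acc => f x + acc) 0 l.

Lemma lsum_app {A} (f : A -> R) l1 l2 : lsum f (l1 ++ l2) = lsum f l1 + lsum f l2.
Proof. induction l1; simpl; [lra|rewrite IHl1; lra]. Qed.

Lemma lsum_flat_map {A B} (f : B -> R) (g : A -> list B) l :
  lsum f (flat_map g l) = lsum (fun x => lsum f (g x)) l.
Proof. induction l; simpl; [auto|rewrite lsum_app, IHl; auto]. Qed.

Lemma lsum_map {A B} (f : B -> R) (g : A -> B) l :
  lsum f (map g l) = lsum (fun x => f (g x)) l.
Proof. induction l; simpl; [auto|rewrite IHl; auto]. Qed.

Lemma lsum_nonneg {A} (f : A -> R) l : (forall x, In x l -> 0 <= f x) -> 0 <= lsum f l.
Proof. induction l; simpl; intros H; [lra|]. pose proof (H a (or_introl eq_refl)).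
  assert (0 <= lsum f l) by (apply IHl; auto). lra. Qed.

Lemma lsum_le {A} (f g : A -> R) l : (forall x, In x l -> f x <= g x) -> lsum f l <= lsum g l.
Proof. induction l; simpl; intros H; [lra|]. pose proof (H a (or_introl eq_refl)).
  assert (lsum f l <= lsum g l) by (apply IHl; auto). lra. Qed.

Lemma lsum_const {A} (c : R) (l : list A) : lsum (fun _ => c) l = INR (length l) * c.
Proof. induction l; simpl length; [simpl; lra|]. rewrite S_INR. simpl. rewrite IHl. lra. Qed.

Lemma lsum_scal {A} (c : R) (f : A -> R) l : lsum (fun x => c * f x) l = c * lsum f l.
Proof. induction l; simpl; [lra|rewrite IHl; lra]. Qed.

Lemma lsum_remove {A} (dec : forall x y : A, {x = y} + {x <> y}) (f : A -> R) x l :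
  (forall y, 0 <= f y) -> In x l -> lsum f (remove dec x l) + f x <= lsum f l.
Proof.
  intros Hf; induction l as [|y l IH]; simpl; [tauto|]. intros [<-|Hin].
  - destruct (dec y y) as [_|n]; [|congruence].
    assert (lsum f (remove dec y l) <= lsum f l).
    { clear IH. induction l as [|z l IH2]; simpl; [lra|]. destruct (dec y z); simpl.
      - pose proof (Hf z); lra.
      - lra. }
    lra.
  - specialize (IH Hin). destruct (dec x y); simpl.
    + subst. pose proof (Hf y). 
      assert (lsum f (remove dec y l) <= lsum f l).
      { clear IH Hin. induction l as [|z l IH2]; simpl; [lra|]. destruct (dec y z); simpl.
        - pose proof (Hf z); lra.
        - lra. }
      lra.
    + lra.
Qed.

Lemma NoDup_incl_lsum {A} (dec : forall x y : A, {x = y} + {x <> y}) (f : A -> R) l1 l2 :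
  (forall y, 0 <= f y) -> NoDup l1 -> incl l1 l2 -> lsum f l1 <= lsum f l2.
Proof.
  intros Hf Hn. revert l2. induction Hn as [|x l1 Hx Hn IH]; intros l2 Hi; simpl.
  - apply lsum_nonneg; auto.
  - assert (In x l2) by (apply Hi; simpl; auto).
    assert (incl l1 (remove dec x l2)).
    { intros y Hy. apply in_in_remove. intro; subst; tauto. apply Hi; simpl; auto. }
    pose proof (IH _ H0). pose proof (lsum_remove dec f x l2 Hf H). lra.
Qed.

Lemma NoDup_flat_map_inj {A B} (f : A -> list B) l :
  NoDup l -> (forall x, In x l -> NoDup (f x)) ->
  (forall x y z, In x l -> In y l -> In z (f x) -> In z (f y) -> x = y) ->
  NoDup (flat_map f l).
Proof.
  induction 1 as [|x l Hx Hn IH]; intros H1 H2; simpl; [constructor|].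
  apply NoDup_app; [apply H1; simpl; auto| |].
  - apply IH; auto. intros; apply H1; simpl; auto. intros; eapply H2; simpl; eauto.
  - intros z Hz Hz'. apply in_flat_map in Hz'. destruct Hz' as [y [Hy Hzy]].
    assert (x = y) by (eapply H2; simpl; eauto). subst; tauto.
Qed.

Lemma length_flat_map_const {A B} (f : A -> list B) l n :
  (forall x, In x l -> length (f x) = n) -> length (flat_map f l) = (length l * n)%nat.
Proof. induction l; simpl; intros H; auto. rewrite length_app, H, IHl; auto. Qed.

Lemma NoDup_map_inj {A B} (f : A -> B) l :
  NoDup l -> (forall x y, In x l -> In y l -> f x = f y -> x = y) -> NoDup (map f l).
Proof. intros Hn H. apply NoDup_map_NoDup_ForallPairs; auto. Qed.

Definition pat (I : nat -> nat -> bool) d := map (I d) (seq 1 d).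

Definition nabP (p : list bool) (k : list nat) : Prop :=
  length k = length p /\
  forall i j, (i < j)%nat -> (j < length p)%nat -> nth i p false = true ->
    nth j p false = true -> (nth i k 0 <= nth j k 0)%nat.

Lemma pat_nth I d i : (i < d)%nat -> nth i (pat I d) false = I d (S i).
Proof. intros H. unfold pat. rewrite nth_indep with (d' := I d 0%nat) by (rewrite length_map, length_seq; auto).
  rewrite map_nth, seq_nth by auto. f_equal; lia. Qed.

Lemma pat_length I d : length (pat I d) = d.
Proof. unfold pat; rewrite length_map, length_seq; auto. Qed.

Lemma nab_iff I d k : nabla_sym I d k <-> nabP (pat I d) k.
Proof.
  unfold nabla_sym, nabP. rewrite pat_length. split; intros [Hl H]; split; auto.
  - intros i j Hij Hj Hi Hj'. rewrite pat_nth in Hi, Hj' by lia.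
    specialize (H (S i) (S j)). replace (S i - 1)%nat with i in H by lia.
    replace (S j - 1)%nat with j in H by lia. apply H; auto; lia.
  - intros i j H1 Hij Hj Hi Hj'. apply H; try lia; rewrite pat_nth by lia;
      [replace (S (i-1)) with i by lia|replace (S (j-1)) with j by lia]; auto.
Qed.

Definition prodf (g : nat -> R) (k : list nat) : R := fold_right Rmult 1 (map g k).

Lemma prodf_app g k1 k2 : prodf g (k1 ++ k2) = prodf g k1 * prodf g k2.
Proof. unfold prodf; induction k1; simpl; [lra|rewrite IHk1; lra]. Qed.

Lemma prodf_repeat g x n : prodf g (repeat x n) = g x ^ n.
Proof. unfold prodf; induction n; simpl; [lra|rewrite IHn; lra]. Qed.

Lemma prodf_nonneg g k : (forall m, 0 <= g m) -> 0 <= prodf g k.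
Proof. intros H; unfold prodf; induction k; simpl; [lra|]. pose proof (H a); nra. Qed.

Lemma prodf_le1 g k : (forall m, 0 <= g m <= 1) -> prodf g k <= 1.
Proof. intros H; unfold prodf; induction k; simpl; [lra|].
  pose proof (H a). assert (0 <= fold_right Rmult 1 (map g k)) by (apply (prodf_nonneg g k); intros; apply H). nra. Qed.

Definition mu (lam : nat -> R) m := lam m / lam 0%nat.

Lemma lam_dk_mu lam k : lam 0%nat <> 0 -> lam_dk lam k = lam 0%nat ^ length k * prodf (mu lam) k.
Proof. intros H. unfold lam_dk, prodf, mu. induction k; simpl; [lra|]. rewrite IHk. field; auto. Qed.

Fixpoint fillp (p : list bool) (v : list nat) : list nat :=
  match p with
  | [] => []
  | true :: p' => 0%nat :: fillp p' v
  | false :: p' => hd 0%nat v :: fillp p' (tl v)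
  end.

Definition nfalse (p : list bool) := length (filter negb p).

Lemma fillp_length p v : length (fillp p v) = length p.
Proof. revert v; induction p as [|[|] p IH]; intros v; simpl; auto. Qed.

Lemma fillp_true p v i : nth i p false = true -> nth i (fillp p v) 0%nat = 0%nat.
Proof. revert v i; induction p as [|[|] p IH]; intros v [|i]; simpl; auto; try discriminate. Qed.

Lemma fillp_nab p v : nabP p (fillp p v).
Proof. split; [apply fillp_length|]. intros i j _ _ Hi _. rewrite (fillp_true _ _ _ Hi). lia. Qed.

Lemma fillp_inj p v1 v2 : length v1 = nfalse p -> length v2 = nfalse p ->
  fillp p v1 = fillp p v2 -> v1 = v2.
Proof.
  unfold nfalse. revert v1 v2; induction p as [|[|] p IH]; intros v1 v2 H1 H2 H; simpl in *.
  - destruct v1, v2; simpl in *; auto; lia.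
  - injection H; intros; apply IH; auto.
  - destruct v1 as [|x1 v1], v2 as [|x2 v2]; simpl in *; try lia.
    injection H; intros; f_equal; auto.
Qed.

Lemma fillp_prod g p v : g 0%nat = 1 -> length v = nfalse p -> prodf g (fillp p v) = prodf g v.
Proof.
  unfold nfalse, prodf. intros H0. revert v; induction p as [|[|] p IH]; intros v H; simpl in *.
  - destruct v; simpl in *; auto; lia.
  - rewrite H0, IH; auto; lra.
  - destruct v as [|x v]; simpl in *; try lia. rewrite IH; auto.
Qed.

Lemma filter_split_len (f : nat -> bool) l :
  (length (filter negb (map f l)) + length (filter f l))%nat = length l.
Proof. induction l; simpl; auto. destruct (f a); simpl; lia. Qed.

Lemma nfalse_pat I d : nfalse (pat I d) = b_of I d.
Proof.
  unfold nfalse, pat, b_of, card_I. pose proof (filter_split_len (I d) (seq 1 d)).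
  rewrite length_seq in H. lia.
Qed.

Definition ntrue (p : list bool) := length (filter (fun b => b) p).
Lemma ntrue_pat I d : ntrue (pat I d) = card_I I d.
Proof. unfold ntrue, pat, card_I. induction (seq 1 d); simpl; auto. destruct (I d a); simpl; lia. Qed.

Lemma ntrue_nfalse p : (ntrue p + nfalse p)%nat = length p.
Proof. unfold ntrue, nfalse; induction p as [|[|] p]; simpl; lia. Qed.

Lemma app_len_inj {T} (x y a b : list T) : length x = length y -> x ++ a = y ++ b -> x = y /\ a = b.
Proof. revert y; induction x as [|u x IH]; intros [|v y] H E; simpl in *; try lia; auto.
  injection E; intros E1 E2; subst. destruct (IH y) as [-> ->]; auto. Qed.

Definition unitv s i : list nat := repeat 0%nat i ++ 1%nat :: repeat 0%nat (s - 1 - i).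
Definition units s := map (unitv s) (seq 0 s).

Lemma unitv_nth s i j : (i < s)%nat -> (j < s)%nat -> nth j (unitv s i) 0%nat = if Nat.eqb i j then 1%nat else 0%nat.
Proof.
  intros Hi Hj. unfold unitv. destruct (lt_eq_lt_dec j i) as [[H|H]|H].
  - rewrite app_nth1 by (rewrite repeat_length; lia). rewrite nth_repeat.
    destruct (Nat.eqb_spec i j); auto; lia.
  - subst. rewrite app_nth2 by (rewrite repeat_length; lia). rewrite repeat_length, Nat.sub_diag, Nat.eqb_refl. auto.
  - rewrite app_nth2 by (rewrite repeat_length; lia). rewrite repeat_length.
    destruct (j - i)%nat eqn:E; [lia|]. simpl. rewrite nth_repeat. destruct (Nat.eqb_spec i j); auto; lia.
Qed.

Lemma units_props g s : g 0%nat = 1 ->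
  NoDup (units s) /\ length (units s) = s /\
  forall x, In x (units s) -> length x = s /\ prodf g x = g 1%nat.
Proof.
  intros H0. unfold units. split; [|split].
  - apply NoDup_map_inj; [apply seq_NoDup|]. intros x y Hx Hy E. apply in_seq in Hx, Hy.
    pose proof (f_equal (fun l => nth x l 0%nat) E) as E'. simpl in E'.
    rewrite !unitv_nth in E' by lia. rewrite Nat.eqb_refl in E'. destruct (Nat.eqb_spec y x); auto; discriminate.
  - rewrite length_map, length_seq; auto.
  - intros x Hx. apply in_map_iff in Hx. destruct Hx as [i [<- Hi]]. apply in_seq in Hi.
    unfold unitv. rewrite length_app, !repeat_length. simpl. rewrite repeat_length; split; [lia|].
    rewrite prodf_app, prodf_repeat, H0, pow1. change (prodf g (1%nat :: repeat 0%nat (s - 1 - i))) with (g 1%nat * prodf g (repeat 0%nat (s-1-i))). rewrite prodf_repeat, H0, pow1. lra.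
Qed.

Fixpoint blocks s j : list (list nat) :=
  match j with
  | O => [[]]
  | S j' => flat_map (fun x => map (fun y => x ++ y) (blocks s j')) (units s)
  end.

Lemma blocks_props g s j : g 0%nat = 1 ->
  NoDup (blocks s j) /\ length (blocks s j) = (s ^ j)%nat /\
  forall x, In x (blocks s j) -> length x = (j * s)%nat /\ prodf g x = g 1%nat ^ j.
Proof.
  intros H0. destruct (units_props g s H0) as [Hu1 [Hu2 Hu3]].
  induction j as [|j [IH1 [IH2 IH3]]]; simpl.
  - split; [repeat constructor; simpl; tauto|]. split; auto. intros x [<-|[]]. split; auto.
  - split; [|split].
    + apply NoDup_flat_map_inj; auto.
      * intros x Hx. apply NoDup_map_inj; auto. intros y z _ _ E. apply app_inv_head in E; auto.
      * intros x y z Hx Hy Hz1 Hz2. apply in_map_iff in Hz1, Hz2.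
        destruct Hz1 as [b1 [<- _]]. destruct Hz2 as [b2 [E _]].
        apply app_len_inj in E; [destruct E; auto|]. rewrite (proj1 (Hu3 x Hx)), (proj1 (Hu3 y Hy)); auto.
    + rewrite (length_flat_map_const _ _ (s ^ j)%nat), Hu2; [lia|].
      intros x _. rewrite length_map; auto.
    + intros x Hx. apply in_flat_map in Hx. destruct Hx as [u [Hu Hx]]. apply in_map_iff in Hx.
      destruct Hx as [y [<- Hy]]. destruct (Hu3 u Hu) as [Q1 Q2]. destruct (IH3 y Hy) as [Q3 Q4].
      rewrite length_app, prodf_app. split; [lia|]. rewrite Q2, Q4; lra.
Qed.

Definition bfam (p : list bool) s j : list (list nat) :=
  map (fun x => fillp p (x ++ repeat 0%nat (nfalse p - j * s))) (blocks s j).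

Lemma bfam_props g p s j : g 0%nat = 1 -> (j * s <= nfalse p)%nat ->
  NoDup (bfam p s j) /\ length (bfam p s j) = (s ^ j)%nat /\
  forall k, In k (bfam p s j) -> nabP p k /\ prodf g k = g 1%nat ^ j.
Proof.
  intros H0 Hjs. destruct (blocks_props g s j H0) as [B1 [B2 B3]]. unfold bfam. split; [|split].
  - apply NoDup_map_inj; auto. intros x y Hx Hy E.
    apply fillp_inj in E; [| rewrite length_app, repeat_length, (proj1 (B3 x Hx)); lia
                            | rewrite length_app, repeat_length, (proj1 (B3 y Hy)); lia].
    apply app_inv_tail in E; auto.
  - rewrite length_map; auto.
  - intros k Hk. apply in_map_iff in Hk. destruct Hk as [x [<- Hx]]. split; [apply fillp_nab|].
    rewrite fillp_prod; auto; [|rewrite length_app, repeat_length, (proj1 (B3 x Hx)); lia].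
    rewrite prodf_app, prodf_repeat, H0, pow1, (proj2 (B3 x Hx)). lra.
Qed.

Definition efam d : list (list nat) := map (fun t => repeat 0%nat t ++ repeat 1%nat (d - t)) (seq 0 (S d)).

Lemma efam_nth d t i : (t <= d)%nat -> (i < d)%nat ->
  nth i (repeat 0%nat t ++ repeat 1%nat (d - t)) 0%nat = if Nat.ltb i t then 0%nat else 1%nat.
Proof. intros Ht Hi. destruct (Nat.ltb_spec i t).
  - rewrite app_nth1 by (rewrite repeat_length; lia). apply nth_repeat.
  - rewrite app_nth2 by (rewrite repeat_length; lia). rewrite repeat_length. apply nth_repeat_lt. lia. Qed.

Lemma efam_props g p : g 0%nat = 1 -> g 1%nat = 1 ->
  NoDup (efam (length p)) /\ length (efam (length p)) = S (length p) /\
  forall k, In k (efam (length p)) -> nabP p k /\ prodf g k = 1.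
Proof.
  intros H0 H1. set (d := length p). unfold efam. split; [|split].
  - apply NoDup_map_inj; [apply seq_NoDup|]. intros x y Hx Hy E. apply in_seq in Hx, Hy.
    destruct (lt_eq_lt_dec x y) as [[H|H]|H]; auto.
    + pose proof (f_equal (fun l => nth x l 0%nat) E) as E'. simpl in E'.
      rewrite !efam_nth in E' by lia. destruct (Nat.ltb_spec x x), (Nat.ltb_spec x y); lia.
    + pose proof (f_equal (fun l => nth y l 0%nat) E) as E'. simpl in E'.
      rewrite !efam_nth in E' by lia. destruct (Nat.ltb_spec y x), (Nat.ltb_spec y y); lia.
  - rewrite length_map, length_seq; auto.
  - intros k Hk. apply in_map_iff in Hk. destruct Hk as [t [<- Ht]]. apply in_seq in Ht. split.
    + split; [rewrite length_app, !repeat_length; fold d; lia|]. intros i j Hij Hj _ _. fold d in Hj.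
      rewrite !efam_nth by lia. destruct (Nat.ltb_spec i t), (Nat.ltb_spec j t); lia.
    + rewrite prodf_app, !prodf_repeat, H0, H1, !pow1. lra.
Qed.

Fixpoint interleave (p : list bool) (u s : list nat) : list nat :=
  match p with
  | [] => []
  | true :: p' => hd 0%nat s :: interleave p' u (tl s)
  | false :: p' => hd 0%nat u :: interleave p' (tl u) s
  end.

Fixpoint extract (p : list bool) (k : list nat) (b0 : bool) : list nat :=
  match p, k with
  | x :: p', y :: k' => if Bool.eqb x b0 then y :: extract p' k' b0 else extract p' k' b0
  | _, _ => []
  end.

Lemma interleave_extract p k : length k = length p ->
  interleave p (extract p k false) (extract p k true) = k.
Proof. revert k; induction p as [|[|] p IH]; intros [|y k] H; simpl in *; try lia; auto;
  f_equal; apply IH; lia. Qed.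

Lemma extract_len_false p k : length k = length p -> length (extract p k false) = nfalse p.
Proof. unfold nfalse. revert k; induction p as [|[|] p IH]; intros [|y k] H; simpl in *; try lia; auto. Qed.
Lemma extract_len_true p k : length k = length p -> length (extract p k true) = ntrue p.
Proof. unfold ntrue. revert k; induction p as [|[|] p IH]; intros [|y k] H; simpl in *; try lia; auto. Qed.

Lemma extract_in p k b y : In y (extract p k b) -> In y k.
Proof. revert k; induction p as [|x p IH]; intros [|z k]; simpl; try tauto.
  destruct (Bool.eqb x b); simpl; intuition. Qed.

Lemma extract_in_nth p k y : In y (extract p k true) ->
  exists j, (j < length p)%nat /\ nth j p false = true /\ nth j k 0%nat = y.
Proof. revert k; induction p as [|x p IH]; intros [|z k]; simpl; try tauto.
  destruct x; simpl.
  - intros [<-|H]; [exists 0%nat; simpl; repeat split; auto; lia|].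
    destruct (IH k H) as [j [? [? ?]]]. exists (S j); simpl; repeat split; auto; lia.
  - intros H. destruct (IH k H) as [j [? [? ?]]]. exists (S j); simpl; repeat split; auto; lia.
Qed.

Lemma nab_sorted p k : nabP p k -> StronglySorted le (extract p k true).
Proof.
  revert k; induction p as [|x p IH]; intros [|z k] [Hl H]; simpl in *; try constructor; try lia.
  assert (Hk : nabP p k).
  { split; [lia|]. intros i j Hij Hj Hi Hj'. apply (H (S i) (S j)); simpl; auto; lia. }
  destruct x; simpl.
  - constructor; [apply IH; auto|]. apply Forall_forall. intros y Hy.
    destruct (extract_in_nth _ _ _ Hy) as [j [Hj1 [Hj2 <-]]]. apply (H 0%nat (S j)); simpl; auto; lia.
  - apply IH; auto.
Qed.

Lemma W_interleave g p u s : length u = nfalse p -> length s = ntrue p ->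
  prodf g (interleave p u s) = prodf g u * prodf g s.
Proof. unfold nfalse, ntrue, prodf. revert u s; induction p as [|[|] p IH]; intros u s Hu Hs; simpl in *.
  - destruct u, s; simpl in *; try lia; lra.
  - destruct s as [|y s]; simpl in *; try lia. rewrite IH; auto; lra.
  - destruct u as [|y u]; simpl in *; try lia. rewrite IH; auto; lra.
Qed.

Definition cnt i s := length (filter (Nat.eqb i) s).

Fixpoint reps_from (i : nat) (c : list nat) : list nat :=
  match c with [] => [] | x :: c' => repeat i x ++ reps_from (S i) c' end.

Lemma filter_imp (f g : nat -> bool) s : (forall x, f x = true -> g x = true) ->
  filter f (filter g s) = filter f s.
Proof. intros H; induction s as [|x s IH]; simpl; auto.
  destruct (g x) eqn:E; simpl; destruct (f x) eqn:E'; auto; try (rewrite IH; auto).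
  rewrite H in E; auto; discriminate. Qed.

Lemma cnt_filter i j s : (i < j)%nat -> cnt j (filter (Nat.ltb i) s) = cnt j s.
Proof. intros H. unfold cnt. rewrite filter_imp; auto. intros x E. apply Nat.eqb_eq in E; subst.
  apply Nat.ltb_lt; auto. Qed.

Lemma sorted_filter f s : StronglySorted le s -> StronglySorted le (filter f s).
Proof. induction 1; simpl; [constructor|]. destruct (f a); auto. constructor; auto.
  rewrite Forall_forall in *. intros x Hx. apply filter_In in Hx. apply H0; tauto. Qed.

Lemma filters_big i x s : (i < x)%nat -> Forall (le x) s ->
  filter (Nat.eqb i) s = [] /\ filter (Nat.ltb i) s = s.
Proof. intros H. induction 1 as [|y s Hy Hs IH]; simpl; auto.
  destruct (Nat.eqb_spec i y); [lia|]. destruct (Nat.ltb_spec i y); [|lia].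
  destruct IH as [-> ->]; auto. Qed.

Lemma sdec1 i s : StronglySorted le s -> Forall (le i) s ->
  s = repeat i (cnt i s) ++ filter (Nat.ltb i) s.
Proof.
  unfold cnt. induction 1 as [|x s Hs IH Hx]; intros Hi; simpl; auto.
  inversion Hi; subst. destruct (Nat.eqb_spec i x).
  - subst. rewrite Nat.ltb_irrefl. simpl. f_equal. apply IH; auto.
  - assert (i < x)%nat by lia. apply Nat.ltb_lt in H as H'. rewrite H'.
    destruct (filters_big i x s H Hx) as [-> ->]. auto.
Qed.

Lemma sdec_multi n i s : StronglySorted le s -> Forall (le i) s ->
  s = reps_from i (map (fun j => cnt j s) (seq i n)) ++ filter (fun x => Nat.leb (i + n) x) s.
Proof.
  revert i s; induction n as [|n IH]; intros i s Hs Hi; simpl.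
  - rewrite Nat.add_0_r. clear Hs. induction Hi as [|y s Hy Hs IH]; simpl; auto.
    destruct (Nat.leb_spec i y); [|lia]. f_equal; auto.
  - rewrite (sdec1 i s Hs Hi) at 1. rewrite <- app_assoc. f_equal.
    set (s1 := filter (Nat.ltb i) s).
    assert (Hs1 : StronglySorted le s1) by (apply sorted_filter; auto).
    assert (Hi1 : Forall (le (S i)) s1).
    { apply Forall_forall. intros x Hx. apply filter_In in Hx. destruct Hx as [_ Hx]. apply Nat.ltb_lt in Hx. lia. }
    rewrite (IH (S i) s1 Hs1 Hi1) at 1. f_equal.
    + f_equal. apply map_ext_in. intros j Hj. apply in_seq in Hj. apply cnt_filter. lia.
    + unfold s1. replace (i + S n)%nat with (S i + n)%nat by lia. apply filter_imp.
      intros x E. apply Nat.leb_le in E. apply Nat.ltb_lt. lia.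
Qed.

Fixpoint boxr (n lo hi : nat) : list (list nat) :=
  match n with
  | O => [[]]
  | S n' => flat_map (fun m => map (cons m) (boxr n' lo hi)) (seq lo (S hi - lo))
  end.

Lemma boxr_in n lo hi x : length x = n -> Forall (fun m => lo <= m <= hi)%nat x -> In x (boxr n lo hi).
Proof. revert x; induction n as [|n IH]; intros [|y x] Hl Hf; simpl in *; try lia; auto.
  inversion Hf; subst; cbv beta in *. apply in_flat_map. exists y. split; [apply in_seq; destruct lo; lia|].
  apply in_map. apply IH; auto. Qed.

Lemma lsum_scal_r {A} (c : R) (f : A -> R) l : lsum (fun x => f x * c) l = lsum f l * c.
Proof. induction l; simpl; [lra|rewrite IHl; lra]. Qed.

Lemma lsum_ext {A} (f g : A -> R) l : (forall x, f x = g x) -> lsum f l = lsum g l.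
Proof. intros H; induction l; simpl; auto. rewrite H, IHl; auto. Qed.

Lemma boxr_sum g n lo hi : lsum (prodf g) (boxr n lo hi) = (lsum g (seq lo (S hi - lo))) ^ n.
Proof. induction n as [|n IH].
  - unfold lsum, prodf; simpl; lra.
  - change (boxr (S n) lo hi) with (flat_map (fun m => map (cons m) (boxr n lo hi)) (seq lo (S hi - lo))).
    rewrite lsum_flat_map, <- tech_pow_Rmult, <- IH, <- (lsum_scal_r (lsum (prodf g) (boxr n lo hi)) g). apply lsum_ext. intros m.
    rewrite lsum_map. unfold prodf at 1. simpl.
    rewrite (lsum_scal (g m) (fun x => fold_right Rmult 1 (map g x))). unfold prodf. lra.
Qed.

Lemma boxr_len n lo hi : length (boxr n lo hi) = ((S hi - lo) ^ n)%nat.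
Proof. induction n as [|n IH]; auto.
  change (boxr (S n) lo hi) with (flat_map (fun m => map (cons m) (boxr n lo hi)) (seq lo (S hi - lo))).
  rewrite (length_flat_map_const _ _ ((S hi - lo) ^ n)%nat), length_seq; [simpl; lia|].
  intros; rewrite length_map; auto. Qed.

Lemma boxr_mem_len n lo hi x : In x (boxr n lo hi) -> length x = n.
Proof. revert x; induction n as [|n IH]; intros x Hx; simpl in Hx.
  - destruct Hx as [<-|[]]; auto.
  - apply in_flat_map in Hx. destruct Hx as [m [_ Hx]]. apply in_map_iff in Hx.
    destruct Hx as [y [<- Hy]]. simpl. f_equal; auto. Qed.

Definition symb a c v := repeat 0%nat (a - length (reps_from 1 c ++ v)) ++ reps_from 1 c ++ v.
Definition Vset a J M := flat_map (fun j => boxr j J M) (seq 0 (S a)).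
Definition cand p J M :=
  flat_map (fun u => flat_map (fun c => flat_map (fun v =>
    if Nat.leb (length (reps_from 1 c ++ v)) (ntrue p) then [interleave p u (symb (ntrue p) c v)] else [])
    (Vset (ntrue p) J M)) (boxr (J - 1) 0 (ntrue p))) (boxr (nfalse p) 0 M).

Lemma filter_len_le {T} (f : T -> bool) l : (length (filter f l) <= length l)%nat.
Proof. induction l; simpl; auto. destruct (f a); simpl; lia. Qed.

Lemma cover p J M k : (1 <= J)%nat -> nabP p k -> (forall y, In y k -> y <= M)%nat ->
  In k (cand p J M).
Proof.
  intros HJ Hk HM. destruct J as [|J']; [lia|]. simpl (S J' - 1)%nat.
  set (u := extract p k false). set (s := extract p k true).
  assert (Hs : StronglySorted le s) by (apply nab_sorted; auto).
  assert (Hs0 : Forall (le 0) s) by (apply Forall_forall; intros; lia).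
  pose proof (sdec_multi (S J') 0 s Hs Hs0) as E.
  change (seq 0 (S J')) with (0%nat :: seq 1 J') in E. change (0 + S J')%nat with (S J') in E.
  cbn [map reps_from] in E. rewrite <- app_assoc in E.
  set (c := map (fun j => cnt j s) (seq 1 J')) in E.
  set (v := filter (fun x => Nat.leb (S J') x) s) in E.
  assert (Hsl : length s = ntrue p) by (apply extract_len_true; apply Hk).
  assert (Hlen : length s = (cnt 0 s + length (reps_from 1 c ++ v))%nat).
  { rewrite E at 1. rewrite !length_app, repeat_length. auto. }
  unfold cand. apply in_flat_map. exists u. split.
  { apply boxr_in. apply extract_len_false, Hk. apply Forall_forall. intros y Hy.
    split; [lia|]. apply HM. eapply extract_in; eauto. }
  apply in_flat_map. exists c. split.
  { apply boxr_in. unfold c. rewrite length_map, length_seq; lia. apply Forall_forall.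
    intros y Hy. unfold c in Hy. apply in_map_iff in Hy. destruct Hy as [j [<- _]].
    split; [lia|]. rewrite <- Hsl. apply filter_len_le. }
  apply in_flat_map. exists v. split.
  { unfold Vset. apply in_flat_map. exists (length v). split.
    - apply in_seq. assert (length v <= length s)%nat by apply filter_len_le. lia.
    - apply boxr_in; auto. apply Forall_forall. intros y Hy. unfold v in Hy.
      apply filter_In in Hy. destruct Hy as [Hy1 Hy2]. apply Nat.leb_le in Hy2. split; auto.
      apply HM. eapply extract_in; eauto. }
  assert (Hc : Nat.leb (length (reps_from 1 c ++ v)) (ntrue p) = true) by (apply Nat.leb_le; lia).
  rewrite Hc. left. unfold symb.
  replace (ntrue p - length (reps_from 1 c ++ v))%nat with (cnt 0 s) by lia.
  rewrite <- E. unfold u, s. apply interleave_extract. apply Hk.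
Qed.

Lemma geo_sum r n : 0 <= r <= 1/2 -> lsum (fun j => r ^ j) (seq 0 n) <= 2 - 2 * r ^ n.
Proof. intros Hr. induction n as [|n IH]; [simpl; lra|].
  rewrite seq_S, lsum_app. simpl. simpl in IH.
  assert (0 <= r ^ n) by (apply pow_le; lra). nra. Qed.

Lemma cand_sum w p J M : w 0%nat = 1 -> (forall m, 0 <= w m <= 1) ->
  lsum (prodf w) (cand p J M) <=
  (lsum w (seq 0 (S M - 0))) ^ (nfalse p) * (INR ((S (ntrue p) - 0) ^ (J - 1)) *
    lsum (fun j => (lsum w (seq J (S M - J))) ^ j) (seq 0 (S (ntrue p)))).
Proof.
  intros H0 Hw. set (a := ntrue p). unfold cand. fold a.
  assert (Hnn : forall k, 0 <= prodf w k) by (intros; apply prodf_nonneg; intros; apply Hw).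
  rewrite <- boxr_sum, <- lsum_scal_r. rewrite lsum_flat_map. apply lsum_le. intros u Hu.
  rewrite lsum_flat_map. rewrite <- (Rmult_1_r (INR _)), <- boxr_len, <- lsum_const.
  rewrite <- lsum_scal_r, <- lsum_scal. apply lsum_le. intros c Hc.
  rewrite lsum_flat_map. unfold Vset. rewrite lsum_flat_map.
  rewrite Rmult_1_l, <- lsum_scal. 
  replace (lsum (fun x => prodf w u * (lsum w (seq J (S M - J)))^x) (seq 0 (S a)))
    with (lsum (fun x => prodf w u * lsum (prodf w) (boxr x J M)) (seq 0 (S a)))
    by (apply lsum_ext; intros; rewrite boxr_sum; auto).
  apply lsum_le. intros j _. rewrite <- lsum_scal. apply lsum_le. intros v Hv.
  destruct (Nat.leb_spec (length (reps_from 1 c ++ v)) a) as [Hl|Hl].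
  - simpl. rewrite W_interleave.
    + unfold symb. rewrite !prodf_app, prodf_repeat, H0, pow1.
      pose proof (prodf_le1 w (reps_from 1 c) Hw). pose proof (Hnn (reps_from 1 c)).
      pose proof (Hnn u). pose proof (Hnn v). assert (0 <= prodf w u * prodf w v) by (apply Rmult_le_pos; auto). assert (0 <= (1 - prodf w (reps_from 1 c)) * (prodf w u * prodf w v)) by (apply Rmult_le_pos; lra). nra.
    + apply boxr_mem_len in Hu; auto.
    + unfold symb. rewrite length_app, repeat_length. fold a. lia.
  - simpl. pose proof (Hnn u). pose proof (Hnn v). nra.
Qed.

Lemma max_exists (ks : list (list nat)) : exists M, forall k y, In k ks -> In y k -> (y <= M)%nat.
Proof. induction ks as [|k ks [M IH]]; [exists 0%nat; simpl; tauto|].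
  exists (max M (list_max k)). intros k' y [<-|H] Hy.
  - pose proof (proj1 (list_max_le k (list_max k)) (le_n _)). rewrite Forall_forall in H. specialize (H y Hy). lia.
  - specialize (IH k' y H Hy). lia.
Qed.

Lemma ub_sum w p J ks S0 : (1 <= J)%nat -> w 0%nat = 1 -> (forall m, 0 <= w m <= 1) ->
  (forall M, lsum w (seq 0 M) <= S0) -> (forall M, lsum w (seq J M) <= 1/2) ->
  NoDup ks -> (forall k, In k ks -> nabP p k) ->
  lsum (prodf w) ks <= S0 ^ nfalse p * INR ((S (ntrue p)) ^ (J - 1)) * 2.
Proof.
  intros HJ H0 Hw HS HJs Hn Hk. destruct (max_exists ks) as [M HM].
  assert (Hnn : forall k, 0 <= prodf w k) by (intros; apply prodf_nonneg; intros; apply Hw).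
  eapply Rle_trans. apply (NoDup_incl_lsum (list_eq_dec Nat.eq_dec)); eauto.
  { intros k Hk'. apply (cover p J M); auto. intros y Hy; eapply HM; eauto. }
  eapply Rle_trans. apply cand_sum; auto.
  rewrite Nat.sub_0_r, Rmult_assoc. apply Rmult_le_compat.
  - apply pow_le. apply lsum_nonneg; intros; apply Hw.
  - apply Rmult_le_pos; [apply pos_INR|]. apply lsum_nonneg. intros; apply pow_le, lsum_nonneg; intros; apply Hw.
  - apply pow_incr. split; [apply lsum_nonneg; intros; apply Hw|apply HS].
  - rewrite Nat.sub_0_r. apply Rmult_le_compat_l; [apply pos_INR|].
    eapply Rle_trans. apply geo_sum. split; [apply lsum_nonneg; intros; apply Hw|apply HJs].
    assert (0 <= lsum w (seq J (S M - J)) ^ S (ntrue p)) by (apply pow_le, lsum_nonneg; intros; apply Hw). lra.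
Qed.

Lemma Rpower_pos' x y : 0 < Rpower x y.
Proof. unfold Rpower; apply exp_pos. Qed.

Lemma exp_le' x y : x <= y -> exp x <= exp y.
Proof. intros [H|H]; [left; apply exp_increasing; auto|subst; lra]. Qed.

Lemma ln_le' x y : 0 < x -> x <= y -> ln x <= ln y.
Proof. intros H [H'|H']; [left; apply ln_increasing; auto|subst; lra]. Qed.

Lemma Rpower_le1 x t : 0 < x <= 1 -> 0 <= t -> Rpower x t <= 1.
Proof. intros Hx Ht. unfold Rpower. rewrite <- exp_0. apply exp_le'.
  assert (ln x <= 0) by (rewrite <- ln_1; apply ln_le'; lra). nra. Qed.

Lemma rpow_nonneg x t : 0 <= rpow x t.
Proof. unfold rpow. destruct (Rle_dec x 0); [lra|left; apply Rpower_pos']. Qed.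

Lemma rpow_pos x t : 0 < x -> rpow x t = Rpower x t.
Proof. intros H. unfold rpow. destruct (Rle_dec x 0); [lra|auto]. Qed.

Lemma rpow_zero x t : x <= 0 -> rpow x t = 0.
Proof. intros H. unfold rpow. destruct (Rle_dec x 0); [auto|lra]. Qed.

Lemma rpow_mul x y t : 0 <= x -> 0 <= y -> rpow (x * y) t = rpow x t * rpow y t.
Proof. intros Hx Hy. destruct Hx as [Hx|<-]; [destruct Hy as [Hy|<-]|].
  - rewrite !rpow_pos; try nra. rewrite Rpower_mult_distr; auto.
  - rewrite Rmult_0_r, (rpow_zero 0); lra.
  - rewrite Rmult_0_l, (rpow_zero 0); lra.
Qed.

Lemma rpow_one t : rpow 1 t = 1.
Proof. rewrite rpow_pos by lra. unfold Rpower. rewrite ln_1, Rmult_0_r, exp_0; auto. Qed.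

Lemma rpow_le1 x t : 0 <= x <= 1 -> 0 <= t -> rpow x t <= 1.
Proof. intros Hx Ht. destruct (Rle_dec x 0). rewrite rpow_zero; lra.
  rewrite rpow_pos by lra. apply Rpower_le1; lra. Qed.

Lemma rpow_plus_nat x t n : 0 <= x -> rpow x (t + INR n) = rpow x t * x ^ n.
Proof. intros [Hx|<-].
  - rewrite !rpow_pos by auto. rewrite Rpower_plus, Rpower_pow; auto.
  - rewrite !rpow_zero by lra. lra.
Qed.

Lemma Rpower_inv x t : 0 < x -> Rpower (/ x) t = / Rpower x t.
Proof. intros H. unfold Rpower. rewrite ln_Rinv by auto. rewrite <- exp_Ropp. f_equal; ring. Qed.

Lemma rpow_div x y t : 0 <= x -> 0 < y -> rpow (x / y) t = rpow x t / Rpower y t.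
Proof. intros Hx Hy. unfold Rdiv. rewrite rpow_mul; [|auto|left; apply Rinv_0_lt_compat; auto].
  rewrite (rpow_pos (/ y)) by (apply Rinv_0_lt_compat; auto). rewrite Rpower_inv; auto. Qed.

Lemma prodf_rpow g t k : (forall m, 0 <= g m) ->
  prodf (fun m => rpow (g m) t) k = rpow (prodf g k) t.
Proof. intros H. unfold prodf. induction k as [|a k IH]; simpl.
  - rewrite rpow_one; auto.
  - rewrite rpow_mul; [rewrite IH; auto|auto|apply (prodf_nonneg g k H)].
Qed.

Lemma sum_f_lsum f n : sum_f_R0 f n = lsum f (seq 0 (S n)).
Proof. induction n as [|n IH]; [simpl; lra|]. rewrite seq_S, lsum_app. simpl. rewrite IH. simpl. lra. Qed.

Lemma sum_mono f n k : (forall m, 0 <= f m) -> (n <= k)%nat -> sum_f_R0 f n <= sum_f_R0 f k.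
Proof. intros H Hnk. induction Hnk; [lra|]. simpl. pose proof (H (S m)). lra. Qed.

Lemma partial_le f l : (forall m, 0 <= f m) -> infinite_sum f l -> forall n, sum_f_R0 f n <= l.
Proof. intros Hf Hl n. destruct (Rle_dec (sum_f_R0 f n) l) as [|Hc]; auto. exfalso.
  destruct (Hl (sum_f_R0 f n - l)) as [N HN]; [lra|]. specialize (HN (max N n) (Nat.le_max_l _ _)).
  pose proof (sum_mono f n (max N n) Hf (Nat.le_max_r _ _)). unfold Rdist in HN.
  rewrite Rabs_right in HN; lra. Qed.

Lemma lsum_seq0_le f l : (forall m, 0 <= f m) -> infinite_sum f l -> forall M, lsum f (seq 0 M) <= l.
Proof. intros Hf Hl [|M].
  - simpl. pose proof (partial_le f l Hf Hl 0). simpl in H. pose proof (Hf 0%nat). lra.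
  - rewrite <- sum_f_lsum. apply partial_le; auto. Qed.

Lemma lsum_ge_const {T} (f : T -> R) c l : (forall x, In x l -> c <= f x) -> INR (length l) * c <= lsum f l.
Proof. intros H. rewrite <- lsum_const. apply lsum_le; auto. Qed.

Lemma lam_mono lam (Hdecr : forall m, lam (S m) <= lam m) n m : (n <= m)%nat -> lam m <= lam n.
Proof. induction 1; [lra|]. pose proof (Hdecr m); lra. Qed.

Lemma div_le1 x y : 0 <= x <= y -> 0 < y -> 0 <= x / y <= 1.
Proof. intros Hx Hy. assert (E : x / y * y = x) by (field; lra).
  assert (0 <= x / y) by (unfold Rdiv; apply Rmult_le_pos; [lra|left; apply Rinv_0_lt_compat; auto]).
  split; auto. nra. Qed.

Lemma div_lt1 x y : 0 <= x < y -> x / y < 1.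
Proof. intros Hx. assert (E : x / y * y = x) by (field; lra).
  assert (0 <= x / y) by (unfold Rdiv; apply Rmult_le_pos; [lra|left; apply Rinv_0_lt_compat; lra]). nra. Qed.

Lemma pow_le_one x n : 0 <= x <= 1 -> x ^ n <= 1.
Proof. intros H. induction n; simpl; [lra|]. pose proof (pow_le x n). nra. Qed.

Lemma eps_sq lam d e : 0 <= lam 0%nat -> (e * eps_init lam d) ^ 2 = e ^ 2 * lam 0%nat ^ d.
Proof. intros H. unfold eps_init. rewrite Rpow_mult_distr, pow2_sqrt; auto. apply pow_le; auto. Qed.

Lemma mu_bounds lam (Hnonneg : forall m, 0 <= lam m) (Hdecr : forall m, lam (S m) <= lam m)
  (H0 : 0 < lam 0%nat) m : 0 <= mu lam m <= 1.
Proof. unfold mu. pose proof (Hnonneg m). pose proof (lam_mono lam Hdecr 0 m (Nat.le_0_l _)).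
  apply div_le1; auto. Qed.

Lemma ub_main lam I (Hnonneg : forall m, 0 <= lam m) (Hdecr : forall m, lam (S m) <= lam m)
  (H0 : 0 < lam 0%nat) tau0 J : tau0 > 0 -> in_ell lam tau0 -> (1 <= J)%nat -> lam J < lam 0%nat ->
  exists tau S0, tau > 0 /\ S0 >= 1 /\ forall d e, (1 <= d)%nat -> 0 < e <= 1 ->
    info_le lam I (e * eps_init lam d) d
      (S0 ^ b_of I d * INR (S (card_I I d) ^ (J - 1)) * 2 * Rpower e (- (2 * tau))).
Proof.
  intros Ht0 [l Hl] HJ HJlt.
  pose proof (mu_bounds lam Hnonneg Hdecr H0) as Hmu.
  set (L0 := Rpower (lam 0%nat) tau0).
  assert (HL0 : 0 < L0) by apply Rpower_pos'.
  set (S0 := l / L0).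
  set (f0 := fun m => rpow (lam m) tau0).
  assert (Hf0 : forall m, 0 <= f0 m) by (intros; apply rpow_nonneg).
  assert (Hsum0 := lsum_seq0_le f0 l Hf0 Hl).
  assert (HS0 : S0 >= 1).
  { unfold S0. specialize (Hsum0 1%nat). simpl in Hsum0. unfold f0 in Hsum0.
    rewrite rpow_pos in Hsum0 by auto. fold L0 in Hsum0. apply Rle_ge.
    assert (E : l / L0 * L0 = l) by (field; lra). nra. }
  set (th := mu lam J).
  assert (Hth : 0 <= th < 1).
  { split; [apply Hmu|]. unfold th, mu. apply div_lt1; split; auto. }
  destruct (pow_lt_1_zero th ltac:(rewrite Rabs_right; lra) (1 / (2 * S0)) ltac:(apply Rdiv_lt_0_compat; lra))
    as [N HN].
  specialize (HN (S N) (Nat.le_succ_diag_r N)). rewrite Rabs_right in HN by (apply Rle_ge, pow_le; lra).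
  set (n := S N) in HN.
  assert (HthS : th ^ n * S0 <= 1/2).
  { apply Rlt_le. replace (1/2) with ((1/(2*S0)) * S0) by (field; lra). apply Rmult_lt_compat_r; lra. }
  set (tau := tau0 + INR n).
  set (w := fun m => rpow (mu lam m) tau).
  assert (Hw : forall m, 0 <= w m <= 1).
  { intros m. split; [apply rpow_nonneg|]. apply rpow_le1; [apply Hmu|]. unfold tau. pose proof (pos_INR n); lra. }
  assert (Hw0 : w 0%nat = 1).
  { unfold w, mu. replace (lam 0%nat / lam 0%nat) with 1 by (field; lra). apply rpow_one. }
  assert (Hwf : forall m, w m = (f0 m / L0) * mu lam m ^ n).
  { intros m. unfold w, tau. rewrite rpow_plus_nat by apply Hmu. unfold mu at 1. rewrite rpow_div; auto. }
  assert (HwS : forall M, lsum w (seq 0 M) <= S0).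
  { intros M. eapply Rle_trans. apply (lsum_le _ (fun m => f0 m * / L0)).
    - intros m _. rewrite Hwf. pose proof (Hf0 m). assert (0 <= mu lam m ^ n <= 1).
      { split; [apply pow_le, Hmu|]. apply pow_le_one, Hmu. }
      assert (0 <= f0 m / L0) by (unfold Rdiv; apply Rmult_le_pos; [auto|left; apply Rinv_0_lt_compat; auto]).
      unfold Rdiv in *. nra.
    - rewrite lsum_scal_r. unfold S0. apply Rmult_le_compat_r; [left; apply Rinv_0_lt_compat; auto|]. auto. }
  assert (HwJ : forall M, lsum w (seq J M) <= 1/2).
  { intros M. eapply Rle_trans. apply (lsum_le _ (fun m => f0 m * (/ L0 * th ^ n))).
    - intros m Hm. apply in_seq in Hm. rewrite Hwf. pose proof (Hf0 m).
      assert (mu lam m ^ n <= th ^ n).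
      { apply pow_incr. split; [apply Hmu|]. unfold th, mu. unfold Rdiv.
        apply Rmult_le_compat_r; [left; apply Rinv_0_lt_compat; auto|]. apply lam_mono; auto; lia. }
      assert (0 <= f0 m / L0) by (unfold Rdiv; apply Rmult_le_pos; [auto|left; apply Rinv_0_lt_compat; auto]).
      unfold Rdiv in *. nra.
    - rewrite lsum_scal_r.
      assert (lsum f0 (seq J M) <= l).
      { eapply Rle_trans; [|apply (Hsum0 (J + M)%nat)]. rewrite seq_app, lsum_app.
        pose proof (lsum_nonneg f0 (seq 0 J) (fun m _ => Hf0 m)). simpl. lra. }
      assert (0 <= th ^ n) by (apply pow_le; lra).
      assert (0 < / L0) by (apply Rinv_0_lt_compat; auto).
      assert (lsum f0 (seq J M) * (/ L0 * th ^ n) <= l * (/ L0 * th ^ n)) by (apply Rmult_le_compat_r; [apply Rmult_le_pos|]; lra).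
      unfold S0 in HthS. unfold Rdiv in HthS. nra. }
  exists tau, S0. split; [unfold tau; pose proof (pos_INR n); lra|]. split; auto.
  intros d e Hd He ks Hn Hks.
  assert (Hkey : forall k, In k ks -> Rpower e (2 * tau) <= prodf w k).
  { intros k Hk. destruct (Hks k Hk) as [Hnab Hgt]. apply nab_iff in Hnab.
    destruct Hnab as [Hlen _]. rewrite pat_length in Hlen.
    rewrite lam_dk_mu in Hgt by lra. rewrite eps_sq in Hgt by lra. rewrite Hlen in Hgt.
    assert (Hpd : 0 < lam 0%nat ^ d) by (apply pow_lt; auto).
    assert (Hp : e ^ 2 < prodf (mu lam) k) by nra.
    unfold w. rewrite prodf_rpow by apply Hmu. rewrite rpow_pos by (pose proof (pow_lt e 2); lra).
    replace (2 * tau) with (INR 2 * tau) by (simpl; ring). rewrite <- Rpower_mult, Rpower_pow by lra.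
    left. apply Rlt_Rpower_l; [unfold tau; pose proof (pos_INR n); lra|]. split; auto. apply pow_lt; lra. }
  pose proof (lsum_ge_const (prodf w) _ ks Hkey) as Hlow.
  pose proof (ub_sum w (pat I d) J ks S0 HJ Hw0 Hw HwS HwJ Hn) as Hup.
  rewrite nfalse_pat, ntrue_pat in Hup.
  assert (Hup' : lsum (prodf w) ks <= S0 ^ b_of I d * INR (S (card_I I d) ^ (J - 1)) * 2).
  { apply Hup. intros k Hk. apply nab_iff. apply Hks; auto. }
  rewrite Rpower_Ropp. pose proof (Rpower_pos' e (2 * tau)).
  apply (Rmult_le_reg_r (Rpower e (2 * tau))); auto.
  rewrite Rmult_assoc, Rinv_l by lra. lra.
Qed.

Lemma ln_sqrt x : 0 < x -> ln (sqrt x) = ln x / 2.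
Proof. intros H. rewrite <- Rpower_sqrt by auto. rewrite ln_Rpower. field. Qed.

Lemma mu0 lam : 0 < lam 0%nat -> mu lam 0 = 1.
Proof. intros H; unfold mu; field; lra. Qed.

Lemma lb_b lam I (Hnonneg : forall m, 0 <= lam m) (Hdecr : forall m, lam (S m) <= lam m)
  (H0 : 0 < lam 0%nat) (H1 : 0 < lam 1%nat) p : p > 0 ->
  exists s : R, s > 0 /\ forall d K, (1 <= d)%nat -> K > 0 ->
   (forall e, 0 < e <= 1 -> info_le lam I (e * eps_init lam d) d (K * Rpower e (-p))) ->
   INR (b_of I d) <= s * (1 + Rabs (ln K + p / 2 * ln 2) / ln 2).
Proof.
  intros Hp. pose proof (mu_bounds lam Hnonneg Hdecr H0) as Hmu.
  set (m1 := mu lam 1%nat).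
  assert (Hm1 : 0 < m1 <= 1) by (split; [unfold m1, mu; apply Rdiv_lt_0_compat; auto|apply Hmu]).
  destruct (INR_unbounded (exp (ln 2 - p / 2 * ln m1))) as [sn Hsn].
  assert (Hln2 : 0 < ln 2) by (pose proof ln_lt_2; lra).
  assert (Hlm1 : ln m1 <= 0) by (rewrite <- ln_1; apply ln_le'; lra).
  assert (Hsn2 : ln 2 - p / 2 * ln m1 <= ln (INR sn)).
  { rewrite <- (ln_exp (ln 2 - p / 2 * ln m1)) at 1. apply ln_le'; [apply exp_pos|lra]. }
  assert (Hsnpos : 0 < INR sn) by (pose proof (exp_pos (ln 2 - p / 2 * ln m1)); lra).
  assert (Hsn1 : (1 <= sn)%nat) by (destruct sn; simpl in Hsnpos; [lra|lia]).
  exists (INR sn). split; auto. intros d K Hd HK Hinfo.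
  set (b := b_of I d). set (j := (b / sn)%nat).
  assert (Hjs : (j * sn <= b)%nat) by (unfold j; rewrite Nat.mul_comm; apply Nat.Div0.mul_div_le).
  assert (Hbj : (b < sn * (S j))%nat).
  { unfold j. pose proof (Nat.div_mod b sn ltac:(lia)). pose proof (Nat.mod_upper_bound b sn ltac:(lia)). lia. }
  destruct (bfam_props (mu lam) (pat I d) sn j (mu0 lam H0) ltac:(rewrite nfalse_pat; auto))
    as [F1 [F2 F3]].
  set (x := m1 ^ j / 2).
  assert (Hx : 0 < x) by (unfold x; apply Rdiv_lt_0_compat; [apply pow_lt|]; lra).
  set (e := sqrt x).
  assert (He : 0 < e <= 1).
  { split; [apply sqrt_lt_R0; auto|]. unfold e. rewrite <- sqrt_1. apply sqrt_le_1_alt.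
    unfold x. pose proof (pow_le_one m1 j ltac:(lra)). lra. }
  specialize (Hinfo e He (bfam (pat I d) sn j) F1).
  assert (Hc : INR (length (bfam (pat I d) sn j)) <= K * Rpower e (- p)).
  { apply Hinfo. intros k Hk. destruct (F3 k Hk) as [Hnab Hpr]. split; [apply nab_iff; auto|].
    destruct Hnab as [Hlen _]. rewrite pat_length in Hlen.
    rewrite lam_dk_mu by lra. rewrite eps_sq by lra. rewrite Hlen, Hpr. fold m1.
    unfold e. rewrite pow2_sqrt by lra. unfold x.
    assert (0 < lam 0%nat ^ d) by (apply pow_lt; auto). assert (0 < m1 ^ j) by (apply pow_lt; lra). nra. }
  rewrite F2, pow_INR in Hc.
  apply ln_le' in Hc; [|apply pow_lt; auto].
  rewrite ln_pow in Hc by auto. rewrite ln_mult in Hc by (auto; apply Rpower_pos').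
  rewrite ln_Rpower in Hc. unfold e in Hc. rewrite ln_sqrt in Hc by auto. unfold x in Hc.
  unfold Rdiv in Hc. rewrite ln_mult in Hc by (try apply pow_lt; lra).
  rewrite ln_pow in Hc by lra. rewrite ln_Rinv in Hc by lra.
  (* Hc : INR j * ln sn <= ln K + - p * ((INR j * ln m1 + - ln 2) / 2) *)
  assert (Hj : INR j * ln 2 <= ln K + p / 2 * ln 2).
  { pose proof (pos_INR j). assert (INR j * (ln 2 - p / 2 * ln m1) <= INR j * ln (INR sn)) by (apply Rmult_le_compat_l; auto).
    nra. }
  assert (Hj' : INR j <= Rabs (ln K + p / 2 * ln 2) / ln 2).
  { apply (Rmult_le_reg_r (ln 2)); auto. unfold Rdiv. rewrite Rmult_assoc, Rinv_l by lra.
    pose proof (Rle_abs (ln K + p / 2 * ln 2)). lra. }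
  apply lt_INR in Hbj. rewrite mult_INR, S_INR in Hbj. fold b. nra.
Qed.

Lemma inv_sq_sum n : sum_f_R0 (fun m => / (INR m + 1) ^ 2) n <= 2 - / (INR n + 1).
Proof. induction n as [|n IH].
  - simpl. replace (/ ((0 + 1) * 1)) with 1 by field. replace (/ (0 + 1)) with 1 by field. lra.
  - change (sum_f_R0 (fun m => / (INR m + 1) ^ 2) (S n)) with
      (sum_f_R0 (fun m => / (INR m + 1) ^ 2) n + / (INR (S n) + 1) ^ 2).
    rewrite S_INR. set (t := INR n). assert (0 <= t) by apply pos_INR. fold t in IH.
    assert (E : / (t + 1) - / (t + 1 + 1) - / (t + 1 + 1) ^ 2 = / ((t + 1) * (t + 1 + 1) ^ 2)) by (field; lra).
    assert (0 < / ((t + 1) * (t + 1 + 1) ^ 2)) by (apply Rinv_0_lt_compat; apply Rmult_lt_0_compat; [|apply pow_lt]; lra).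
    lra.
Qed.

Lemma lb_ell lam I (Hnonneg : forall m, 0 <= lam m) (Hdecr : forall m, lam (S m) <= lam m)
  (H0 : 0 < lam 0%nat) C p : C > 0 -> p > 0 ->
  (forall e, 0 < e <= 1 -> info_le lam I (e * eps_init lam 1) 1 (C * Rpower e (-p))) ->
  in_ell lam p.
Proof.
  intros HC Hp Hinfo. pose proof (mu_bounds lam Hnonneg Hdecr H0) as Hmu.
  set (A := Rpower (2 * lam 0%nat) p * C ^ 2).
  assert (Hterm : forall m, rpow (lam m) p <= A * / (INR m + 1) ^ 2).
  { intros m. assert (HA : 0 < A) by (unfold A; apply Rmult_lt_0_compat; [apply Rpower_pos'|apply pow_lt; lra]).
    assert (0 < / (INR m + 1) ^ 2) by (apply Rinv_0_lt_compat, pow_lt; pose proof (pos_INR m); lra).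
    destruct (Rle_dec (lam m) 0) as [Hz|Hz]. { rewrite rpow_zero by auto. nra. }
    apply Rnot_le_lt in Hz. rewrite rpow_pos by auto.
    set (x := mu lam m / 2).
    assert (Hx : 0 < x) by (unfold x, mu; apply Rdiv_lt_0_compat; [apply Rdiv_lt_0_compat|]; lra).
    set (e := sqrt x).
    assert (He : 0 < e <= 1).
    { split; [apply sqrt_lt_R0; auto|]. unfold e. rewrite <- sqrt_1. apply sqrt_le_1_alt.
      unfold x. pose proof (Hmu m). lra. }
    set (ks := map (fun i => [i]) (seq 0 (S m))).
    assert (Hc : INR (length ks) <= C * Rpower e (-p)).
    { apply Hinfo; auto.
      - apply NoDup_map_inj; [apply seq_NoDup|]. intros a b _ _ E; injection E; auto.
      - intros k Hk. unfold ks in Hk. apply in_map_iff in Hk. destruct Hk as [i [<- Hi]].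
        apply in_seq in Hi. split.
        + split; auto. intros; lia.
        + rewrite eps_sq by lra. unfold e. rewrite pow2_sqrt by lra. unfold x, mu, lam_dk. simpl.
          pose proof (lam_mono lam Hdecr i m ltac:(lia)).
          replace (lam m / lam 0%nat / 2 * (lam 0%nat * 1)) with (lam m / 2) by (field; lra). lra. }
    unfold ks in Hc. rewrite length_map, length_seq, S_INR in Hc.
    unfold e in Hc. rewrite <- Rpower_sqrt in Hc by auto. rewrite Rpower_mult in Hc.
    replace (/ 2 * - p) with (- (p / 2)) in Hc by field. rewrite Rpower_Ropp in Hc.
    set (y := Rpower x (p / 2)) in Hc.
    assert (Hy : 0 < y) by apply Rpower_pos'.
    assert (Hc' : y * (INR m + 1) <= C).
    { apply (Rmult_le_compat_l y) in Hc; [|lra]. rewrite <- Rmult_assoc, (Rmult_comm y C), Rmult_assoc, Rinv_r in Hc by lra. lra. }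
    replace (lam m) with (2 * lam 0%nat * x) by (unfold x, mu; field; lra).
    rewrite <- Rpower_mult_distr by (first [lra | apply Rmult_lt_0_compat; lra]).
    replace (Rpower x p) with (y ^ 2).
    2:{ unfold y. rewrite <- Rpower_pow by apply Rpower_pos'. rewrite Rpower_mult. f_equal. simpl; field. }
    unfold A. assert (0 <= y * (INR m + 1)) by (apply Rmult_le_pos; [lra| pose proof (pos_INR m); lra]).
    assert (Hsq : (y * (INR m + 1)) ^ 2 <= C ^ 2) by (apply pow_incr; lra).
    assert (E : y ^ 2 = (y * (INR m + 1)) ^ 2 * / (INR m + 1) ^ 2) by (field; pose proof (pos_INR m); lra).
    rewrite E. pose proof (Rpower_pos' (2 * lam 0%nat) p).
    rewrite <- Rmult_assoc. apply Rmult_le_compat_r; [lra|]. apply Rmult_le_compat_l; lra. }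
  set (u := fun n => sum_f_R0 (fun m => rpow (lam m) p) n).
  assert (Hg : Un_growing u).
  { intros n. unfold u. simpl. pose proof (rpow_nonneg (lam (S n)) p). lra. }
  assert (Hb : has_ub u).
  { exists (A * 2). intros z [n ->]. unfold u.
    eapply Rle_trans. apply (sum_Rle _ (fun m => / (INR m + 1) ^ 2 * A)). intros; rewrite Rmult_comm; apply Hterm.
    rewrite <- scal_sum. pose proof (inv_sq_sum n).
    assert (0 < / (INR n + 1)) by (apply Rinv_0_lt_compat; pose proof (pos_INR n); lra).
    assert (0 <= A) by (unfold A; apply Rmult_le_pos; [left; apply Rpower_pos'|apply pow_le; lra]).
    apply Rmult_le_compat_l; lra. }
  destruct (growing_cv u Hg Hb) as [l Hl]. exists l. intros eps Heps.
  destruct (Hl eps Heps) as [N HN]. exists N. intros n Hn. apply HN; auto.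
Qed.

Lemma lb_eq lam I (H0 : 0 < lam 0%nat) (Heq : lam 1%nat = lam 0%nat) C p :
  ~ (forall d e, (1 <= d)%nat -> 0 < e <= 1 -> info_le lam I (e * eps_init lam d) d (C * Rpower e (-p))).
Proof.
  intros H. destruct (INR_unbounded (C * Rpower (1/2) (-p))) as [d Hd].
  specialize (H (S d) (1/2) ltac:(lia) ltac:(lra) (efam (length (pat I (S d))))).
  destruct (efam_props (mu lam) (pat I (S d)) (mu0 lam H0) ltac:(unfold mu; rewrite Heq; field; lra))
    as [F1 [F2 F3]].
  specialize (H F1). rewrite F2, pat_length, S_INR in H.
  assert (HH : INR (S d) + 1 <= C * Rpower (1 / 2) (- p)).
  { rewrite S_INR. rewrite S_INR in H. apply H. intros k Hk.
    rewrite <- (pat_length I (S d)) in Hk. destruct (F3 k Hk) as [Hnab Hpr].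
    split; [apply nab_iff; auto|]. destruct Hnab as [Hlen _]. rewrite pat_length in Hlen.
    rewrite lam_dk_mu by lra. rewrite eps_sq by lra. rewrite Hlen, Hpr.
    assert (0 < lam 0%nat ^ S d) by (apply pow_lt; auto). nra. }
  rewrite S_INR in HH. lra.
Qed.

Lemma info_mono lam I eps d N1 N2 : info_le lam I eps d N1 -> N1 <= N2 -> info_le lam I eps d N2.
Proof. intros H Hn ks Hk Hks. specialize (H ks Hk Hks). lra. Qed.

Lemma Rpower_one_base q : Rpower 1 q = 1.
Proof. unfold Rpower. rewrite ln_1, Rmult_0_r, exp_0; auto. Qed.

Lemma card_le I d : (card_I I d <= d)%nat.
Proof. unfold card_I. pose proof (filter_len_le (I d) (seq 1 d)). rewrite length_seq in H. auto. Qed.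

Lemma ln_INR_nonneg d : (1 <= d)%nat -> 0 <= ln (INR d).
Proof. intros H. rewrite <- ln_1. apply ln_le'; [lra|]. apply (le_INR 1); auto. Qed.

Theorem theorem3 (lam : nat -> R) (I : nat -> nat -> bool)
  (* eigenvalues of S_1^dagger S_1 for compact S_1 on infinite-dim. H_1 *)
  (Hnonneg : forall m, 0 <= lam m)
  (Hdecr : forall m, lam (S m) <= lam m)
  (Hlim : Un_cv lam 0)
  (* standing assumptions: lambda_2 > 0, eps_init > 0 *)
  (Hlam2 : lam 1%nat > 0)
  (Hinit : forall d, (1 <= d)%nat -> eps_init lam d > 0)
  (* I_d nonempty subset of {1..d}, I_1 = {1} *)
  (HIsub : forall d i, I d i = true -> (1 <= i <= d)%nat)
  (HIne : forall d, (1 <= d)%nat -> exists i, I d i = true)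
  (HI1 : I 1%nat 1%nat = true) :
  (strongly_poly_tractable lam I <->
     ((exists tau, tau > 0 /\ in_ell lam tau) /\ lam 0%nat > lam 1%nat /\
      exists C : R, forall d, (1 <= d)%nat -> INR (b_of I d) <= C))
  /\
  (poly_tractable lam I <->
     ((exists tau, tau > 0 /\ in_ell lam tau) /\
      exists C : R, forall d, (1 <= d)%nat ->
        INR (b_of I d) <= C * (1 + ln (INR d)))).
Proof.
  assert (H0 : 0 < lam 0%nat) by (pose proof (Hdecr 0%nat); lra).
  assert (Hln2 : 0 < ln 2) by (pose proof ln_lt_2; lra).
  split; split.
  - intros [C [p [HC [Hp Hspt]]]]. split; [|split].
    + exists p. split; auto. apply (lb_ell lam I Hnonneg Hdecr H0 C p); auto.
    + destruct (Rtotal_order (lam 0%nat) (lam 1%nat)) as [Hl|[Hl|Hl]]; auto.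
      * pose proof (Hdecr 0%nat); lra.
      * exfalso. apply (lb_eq lam I H0 (eq_sym Hl) C p). auto.
    + destruct (lb_b lam I Hnonneg Hdecr H0 Hlam2 p Hp) as [s [Hs Hb]].
      exists (s * (1 + Rabs (ln C + p / 2 * ln 2) / ln 2)). intros d Hd.
      apply Hb; auto.
  - intros [[tau [Ht Hell]] [Hgt [Cb HCb]]].
    destruct (ub_main lam I Hnonneg Hdecr H0 tau 1 Ht Hell (le_n 1) Hgt) as [tau' [S0 [Ht' [HS0 Hub]]]].
    destruct (INR_unbounded Cb) as [N HN].
    exists (S0 ^ N * 2), (2 * tau'). split; [apply Rmult_lt_0_compat; [apply pow_lt|]; lra|].
    split; [lra|]. intros d e Hd He. eapply info_mono; [apply Hub; auto|].
    rewrite Nat.sub_diag, Nat.pow_0_r. simpl INR. rewrite Rmult_1_r.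
    assert (b_of I d <= N)%nat by (apply INR_le; specialize (HCb d Hd); lra).
    pose proof (Rpower_pos' e (- (2 * tau'))).
    apply Rmult_le_compat_r; [lra|]. apply Rmult_le_compat_r; [lra|]. apply Rle_pow; [lra|auto].
  - intros [C [p [q [HC [Hp [Hq Hpt]]]]]]. split.
    + exists p. split; auto. apply (lb_ell lam I Hnonneg Hdecr H0 C p); auto.
      intros e He. eapply info_mono; [apply Hpt; auto|]. simpl INR. rewrite Rpower_one_base. lra.
    + destruct (lb_b lam I Hnonneg Hdecr H0 Hlam2 p Hp) as [s [Hs Hb]].
      set (c0 := ln C + p / 2 * ln 2).
      exists (s * (1 + Rabs c0 / ln 2) + s * q / ln 2). intros d Hd.
      assert (Hdpos : 0 < INR d) by (apply (lt_INR 0); lia).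
      set (K := C * Rpower (INR d) q).
      assert (HK : K > 0) by (unfold K; apply Rmult_lt_0_compat; [lra|apply Rpower_pos']).
      eapply Rle_trans. apply (Hb d K Hd HK).
      { intros e He. eapply info_mono; [apply Hpt; auto|]. unfold K. lra. }
      unfold K. rewrite ln_mult by (try lra; apply Rpower_pos'). rewrite ln_Rpower.
      pose proof (ln_INR_nonneg d Hd) as Hld.
      assert (Habs : Rabs (ln C + q * ln (INR d) + p / 2 * ln 2) <= Rabs c0 + q * ln (INR d)).
      { unfold c0. replace (ln C + q * ln (INR d) + p / 2 * ln 2) with ((ln C + p / 2 * ln 2) + q * ln (INR d)) by ring.
        eapply Rle_trans; [apply Rabs_triang|]. rewrite (Rabs_right (q * ln (INR d))); [lra|].
        apply Rle_ge, Rmult_le_pos; lra. }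
      assert (Hc0 : 0 <= Rabs c0) by apply Rabs_pos.
      assert (Hi : 0 < / ln 2) by (apply Rinv_0_lt_compat; lra).
      unfold Rdiv. 
      assert (Rabs (ln C + q * ln (INR d) + p / 2 * ln 2) * / ln 2 <= (Rabs c0 + q * ln (INR d)) * / ln 2)
        by (apply Rmult_le_compat_r; lra).
      assert (0 <= s * q * / ln 2 * ln (INR d)) by (apply Rmult_le_pos; [apply Rmult_le_pos|]; [apply Rmult_le_pos|..]; lra).
      assert (0 <= s * (1 + Rabs c0 * / ln 2)) by (apply Rmult_le_pos; [lra|]; assert (0 <= Rabs c0 * / ln 2) by (apply Rmult_le_pos; lra); lra).
      assert (0 <= s * q * / ln 2) by (apply Rmult_le_pos; [apply Rmult_le_pos|]; lra).
      nra.
  - intros [[tau [Ht Hell]] [Cb HCb]].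
    destruct (Hlim (lam 0%nat) H0) as [N HN].
    assert (HJ : lam (S N) < lam 0%nat).
    { specialize (HN (S N) ltac:(lia)). unfold Rdist in HN. rewrite Rminus_0_r in HN.
      pose proof (Rle_abs (lam (S N))). lra. }
    destruct (ub_main lam I Hnonneg Hdecr H0 tau (S N) Ht Hell ltac:(lia) HJ) as [tau' [S0 [Ht' [HS0 Hub]]]].
    set (Cb' := Rmax Cb 0). set (J1 := (S N - 1)%nat).
    assert (HlS0 : 0 <= ln S0) by (rewrite <- ln_1; apply ln_le'; lra).
    assert (HCb' : 0 <= Cb') by apply Rmax_r.
    exists (Rpower S0 Cb' * 2 ^ J1 * 2), (2 * tau'), (Cb' * ln S0 + INR J1).
    split; [apply Rmult_lt_0_compat; [apply Rmult_lt_0_compat; [apply Rpower_pos'|apply pow_lt]|]; lra|].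
    split; [lra|]. split; [pose proof (pos_INR J1); apply Rle_ge, Rplus_le_le_0_compat; [apply Rmult_le_pos|]; lra|].
    intros d e Hd He. eapply info_mono; [apply Hub; auto|]. fold J1.
    assert (Hdpos : 0 < INR d) by (apply (lt_INR 0); lia).
    pose proof (ln_INR_nonneg d Hd) as Hld.
    pose proof (Rpower_pos' e (- (2 * tau'))) as HE.
    assert (Hb1 : S0 ^ b_of I d <= Rpower S0 Cb' * Rpower (INR d) (Cb' * ln S0)).
    { rewrite <- Rpower_pow by lra. unfold Rpower. rewrite <- exp_plus. apply exp_le'.
      specialize (HCb d Hd).
      assert (INR (b_of I d) <= Cb' * (1 + ln (INR d))).
      { eapply Rle_trans; [apply HCb|]. apply Rmult_le_compat_r; [lra|apply Rmax_l]. }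
      nra. }
    assert (Hb2 : INR (S (card_I I d) ^ J1) <= 2 ^ J1 * Rpower (INR d) (INR J1)).
    { rewrite Rpower_pow by auto. rewrite <- Rpow_mult_distr, pow_INR. apply pow_incr.
      split; [apply pos_INR|]. pose proof (card_le I d). apply le_INR in H. rewrite S_INR.
      apply (le_INR 1) in Hd. simpl in Hd. lra. }
    replace (Rpower S0 Cb' * 2 ^ J1 * 2 * Rpower e (- (2 * tau')) * Rpower (INR d) (Cb' * ln S0 + INR J1))
      with ((Rpower S0 Cb' * Rpower (INR d) (Cb' * ln S0)) * (2 ^ J1 * Rpower (INR d) (INR J1)) * 2 * Rpower e (- (2 * tau')))
      by (rewrite Rpower_plus; ring).
    apply Rmult_le_compat_r; [lra|]. apply Rmult_le_compat_r; [lra|].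
    apply Rmult_le_compat; [apply pow_le; lra|apply pos_INR|auto|auto].
Qed.
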